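(* Let $(i,j,t,u,v)$ be an arbitrary permutation of $(1,2,3,4,5)$. The monomials $x_i^2x_jx_t^3x_u^3x_v^3$ with $i<j$, and $x_i^3x_j^4x_t^3x_u^7x_v^7$ with $i<j<t$, are strictly inadmissible in $P_5$.
   Context: $P_k=\mathbb F_2[x_1,\dots,x_k]$, $\deg x_i=1$, with the standard action of the mod-2 Steenrod algebra $\mathcal A$. $\mathcal A_s$ is the sub-Hopf algebra generated by $Sq^i$, $0\le i\le2^s$, and $\mathcal A_s^+=\mathcal A^+\cap\mathcal A_s$. For a monomial $x$, $\nu_j(x)$ is the exponent of $x_j$, $\alpha_i(a)$ the $i$-th binary digit of $a$, $\omega(x)=(\omega_i(x))$ with $\omega_i(x)=\sum_j\alpha_{i-1}(\nu_j(x))$, $\sigma(x)=(\nu_1(x),\dots,\nu_k(x))$, both ordered left-lexicographically; for monomials of equal degree $u<v$ iff $\omega(u)<\omega(v)$, or $\omega(u)=\omega(v)$ and $\sigma(u)<\sigma(v)$. A monomial $u$ is strictly inadmissible if there exist monomials $v_1,\dots,v_r<u$ with $u+\sum_jv_j\in\mathcal A_{s-1}^+P_k$, where $s=\max\{i:\omega_i(u)>0\}$. *)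

(* Defs.v *)
From HB Require Import structures.
From mathcomp Require Import all_boot all_order all_algebra all_fingroup.
From mathcomp Require Import mpoly.
Set Implicit Arguments. Unset Strict Implicit. Unset Printing Implicit Defensive.
Import GRing.Theory.
Local Open Scope ring_scope.

(* P_k := F_2[x_1,...,x_k]; variables are indexed by 'I_k (x_{i+1} <-> i). *)
Notation P k := {mpoly 'F_2[k]}.

(* Sq^i on a monomial x^m, by the Cartan formula and Sq^e(x^a) = C(a,e) x^(a+e):
   Sq^i(x^m) = sum_{e_1+..+e_k = i} prod_j C(m_j,e_j) x^(m+e). *)
Definition SqMon (k i : nat) (m : 'X_{1..k}) : P k :=
  \sum_(e : {ffun 'I_k -> 'I_i.+1} | (\sum_(j < k) (e j : nat))%N == i)
     (\prod_(j < k) ('C(m j, e j))%:R) *: 'X_[[multinom (m j + e j)%N | j < k]].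

Definition Sq (k i : nat) (f : P k) : P k :=
  \sum_(m <- msupp f) f@_m *: SqMon i m.

Definition Sqword (k : nat) (w : seq nat) (f : P k) : P k :=
  foldr (fun i g => Sq i g) f w.

(* A_s^+ P_k : the image of the augmentation ideal of A_s (the subalgebra
   generated by Sq^i, 0 <= i <= 2^s) acting on P_k.  A_s^+ is spanned by the
   nonempty words in Sq^i with 1 <= i <= 2^s, so A_s^+ P_k is the F_2-span of
   the elements w(f), w such a word, f in P_k. *)
Inductive hitA (k s : nat) : P k -> Prop :=
  | hitA0 : hitA s 0
  | hitAD f g : hitA s f -> hitA s g -> hitA s (f + g)
  | hitAw (w : seq nat) (f : P k) :
      w != [::] -> all (fun i => (1 <= i <= 2 ^ s)%N) w ->
      hitA s (Sqword w f).

Definition alpha (i a : nat) : nat := odd (a %/ 2 ^ i).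

Definition omega (k : nat) (x : 'X_{1..k}) (i : nat) : nat :=
  (\sum_(j < k) alpha i.-1 (x j))%N.

Definition lexlt (start : nat) (a b : nat -> nat) : Prop :=
  exists i, (start <= i)%N /\ (forall l, (start <= l < i)%N -> a l = b l) /\ (a i < b i)%N.

Definition mono_lt (k : nat) (u v : 'X_{1..k}) : Prop :=
  lexlt 1 (omega u) (omega v) \/
  ((forall i, (1 <= i)%N -> omega u i = omega v i) /\
   lexlt 0 (fun j => nth 0%N (val u) j) (fun j => nth 0%N (val v) j)).

(* s = max{ i : omega_i(u) > 0 }  (omega_i(u) = 0 for i > deg u + 1) *)
Definition smax (k : nat) (u : 'X_{1..k}) : nat :=
  \max_(1 <= i < (mdeg u).+2 | (0 < omega u i)%N) i.

Definition strictly_inadmissible (k : nat) (u : 'X_{1..k}) : Prop :=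
  exists vs : seq 'X_{1..k},
    (forall v, v \in vs -> mdeg v = mdeg u /\ mono_lt v u) /\
    hitA (smax u).-1 ('X_[u] + \sum_(v <- vs) 'X_[v]).

(* the monomial x_{p 0}^{e 0} ... x_{p 4}^{e 4} for a permutation p of 'I_5 *)
Definition mon5 (p : 'S_5) (e : nat -> nat) : 'X_{1..5} :=
  [multinom e (((p^-1)%g j) : nat) | j < 5].

(* Main.v *)
Require Import Defs.
From mathcomp Require Import all_boot all_order all_algebra all_fingroup.
From mathcomp Require Import mpoly zify.
Set Implicit Arguments. Unset Strict Implicit. Unset Printing Implicit Defensive.
Import GRing.Theory.

Local Open Scope ring_scope.

Lemma Sq_seq k i (f : P k) (s : seq 'X_{1..k}) : uniq s -> {subset msupp f <= s} ->
  Sq i f = \sum_(m <- s) f@_m *: SqMon i m.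
Proof.
move=> us sub; rewrite /Sq [RHS](bigID (fun m => m \in msupp f)) /=.
rewrite [X in _ + X]big1 ?addr0; last by move=> m /memN_msupp_eq0 ->; rewrite scale0r.
rewrite -[in RHS]big_filter. apply: perm_big; apply: uniq_perm.
- exact: msupp_uniq.
- exact: filter_uniq.
move=> x; rewrite mem_filter; case: (boolP (x \in msupp f)) => [h|h] /=; last by [].
by rewrite (sub _ h).
Qed.

Lemma SqD k i (f g : P k) : Sq i (f + g) = Sq i f + Sq i g.
Proof.
set s := undup (msupp f ++ msupp g ++ msupp (f + g)).
have us : uniq s by apply: undup_uniq.
rewrite (@Sq_seq _ _ (f + g) s us) ?(@Sq_seq _ _ f s us) ?(@Sq_seq _ _ g s us);
  try by move=> x hx; rewrite mem_undup !mem_cat hx ?orbT.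
rewrite -big_split; apply: eq_bigr => m _; by rewrite mcoeffD scalerDl.
Qed.

Lemma Sq0 k i : Sq i (0 : P k) = 0.
Proof. by rewrite /Sq msupp0 big_nil. Qed.

Lemma SqX k i (m : 'X_{1..k}) : Sq i 'X_[m] = SqMon i m.
Proof. by rewrite /Sq msuppX big_seq1 mcoeffX eqxx scale1r. Qed.

Lemma F2nat n : (n%:R : 'F_2) = (odd n)%:R.
Proof. by rewrite -(@Fp_nat_mod 2 erefl n) modn2. Qed.

Lemma addxx5 (x : P 5) : x + x = 0.
Proof.
have -> : x + x = (1 + 1 : 'F_2) *: x by rewrite scalerDl scale1r.
have -> : (1 + 1 : 'F_2) = 0 by rewrite -[1 + 1]/(2%:R) F2nat.
by rewrite scale0r.
Qed.

Local Close Scope ring_scope.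


Definition interp (p : 'S_5) (L : seq (seq nat)) : P 5 :=
  (\sum_(l <- L) 'X_[mon5 p (nth 0%N l)])%R.

Fixpoint xnorm (L : seq (seq nat)) : seq (seq nat) :=
  match L with [::] => [::] | x :: L => let N := xnorm L in
    if x \in N then rem x N else x :: N end.

Lemma interp_cat p L1 L2 : interp p (L1 ++ L2) = (interp p L1 + interp p L2)%R.
Proof. by rewrite /interp big_cat. Qed.

Lemma interp_xnorm p L : interp p (xnorm L) = interp p L.
Proof.
elim: L => //= x L IH; rewrite /interp big_cons; case: ifP => hx.
  rewrite -/(interp p L) -IH /interp (perm_big _ (perm_to_rem hx)) big_cons.
  by rewrite addrA addxx5 add0r.
by rewrite big_cons -/(interp p L) -IH.
Qed.

Lemma interp_perm p L1 L2 : perm_eq L1 L2 -> interp p L1 = interp p L2.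
Proof. by move=> h; rewrite /interp (perm_big _ h). Qed.

Fixpoint dlist (k n : nat) : seq (seq nat) :=
  if n is n'.+1 then [seq x :: l | x <- iota 0 k.+1, l <- dlist k n'] else [:: [::]].

Definition prodC (e l : seq nat) : nat :=
  foldr muln 1%N (mkseq (fun a => 'C(nth 0%N e a, nth 0%N l a)) 5).

Definition sqL (k : nat) (e : seq nat) : seq (seq nat) :=
  [seq mkseq (fun a => nth 0%N e a + nth 0%N l a)%N 5 |
     l <- dlist k 5 & (sumn l == k) && odd (prodC e l)].

Definition toL k (d : {ffun 'I_5 -> 'I_k.+1}) : seq nat := mkseq (fun a => val (d (inord a))) 5.
Definition ofL k (l : seq nat) : {ffun 'I_5 -> 'I_k.+1} := [ffun a : 'I_5 => inord (nth 0%N l a)].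

Lemma nth_toL k d (a : 'I_5) : nth 0%N (@toL k d) a = d a.
Proof. by rewrite /toL nth_mkseq // inord_val. Qed.

Lemma toL_inj k : injective (@toL k).
Proof.
move=> d1 d2 h; apply/ffunP => a; apply: ord_inj.
by have := nth_toL d1 a; rewrite h nth_toL.
Qed.

Definition shaped k (l : seq nat) := (size l == 5) && all (fun x => x <= k)%N l.

Lemma toL_ofL k l : shaped k l -> toL (@ofL k l) = l.
Proof.
case/andP => /eqP hs ha.
rewrite -[RHS](mkseq_nth 0%N) hs /toL /mkseq. apply/eq_in_map => a; rewrite mem_iota => /andP [_ ha5].
rewrite /ofL ffunE /= inordK // inordK //.
have : nth 0%N l a \in l by rewrite mem_nth // hs.
by move/(allP ha).
Qed.

Lemma sum_ffun_dlist k (F : seq nat -> P 5) :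
  uniq (dlist k 5) -> all (shaped k) (dlist k 5) -> size (dlist k 5) = (k.+1 ^ 5)%N ->
  (\sum_(d : {ffun 'I_5 -> 'I_k.+1}) F (toL d) = \sum_(l <- dlist k 5) F l)%R.
Proof.
move=> Hu Hs Hc.
rewrite -(big_map (@toL k) xpredT F); apply: perm_big.
have U2 : uniq (map (@toL k) (index_enum {ffun 'I_5 -> 'I_k.+1})).
  by rewrite map_inj_uniq ?index_enum_uniq //; apply: toL_inj.
have sub : {subset dlist k 5 <= map (@toL k) (index_enum {ffun 'I_5 -> 'I_k.+1})}.
  move=> l hl; rewrite -(toL_ofL (allP Hs l hl)); apply: map_f; exact: mem_index_enum.
have sz : size (index_enum {ffun 'I_5 -> 'I_k.+1}) = #|{ffun 'I_5 -> 'I_k.+1}|.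
  by rewrite cardE -deprecated_filter_index_enum filter_predT.
have le : (size (map (@toL k) (index_enum {ffun 'I_5 -> 'I_k.+1})) <= size (dlist k 5))%N.
  by rewrite size_map sz Hc card_ffun !card_ord.
have [_ eqm] := uniq_min_size Hu sub le.
rewrite perm_sym uniq_perm // => x; rewrite eqm //.
Qed.


Lemma sumn_mkseq f n : sumn (mkseq f n) = (\sum_(i < n) f i)%N.
Proof. by rewrite /mkseq sumnE big_map -(big_mkord xpredT f) /index_iota subn0. Qed.

Lemma prod_mkseq f n : foldr muln 1%N (mkseq f n) = (\prod_(i < n) f i)%N.
Proof.
rewrite -(big_mkord xpredT f) /index_iota subn0 /mkseq.
elim: (iota 0 n) => [|x s IH]; first by rewrite big_nil.
by rewrite big_cons /= IH.
Qed.

Lemma F2scale (c : nat) (x : P 5) : ((c%:R : 'F_2) *: x = if odd c then x else 0)%R.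
Proof. by rewrite F2nat; case: (odd c); rewrite ?scale1r ?scale0r. Qed.

Lemma SqMon_mon5 k (p : 'S_5) (e : seq nat) :
  uniq (dlist k 5) -> all (shaped k) (dlist k 5) -> size (dlist k 5) = (k.+1 ^ 5)%N ->
  SqMon k (mon5 p (nth 0%N e)) = interp p (sqL k e).
Proof.
move=> Hu Hs Hc.
pose F (l : seq nat) : P 5 := if (sumn l == k) then
   (((prodC e l)%:R : 'F_2) *: 'X_[mon5 p (fun a => nth 0 e a + nth 0 l a)%N])%R else 0%R.
transitivity (\sum_(d : {ffun 'I_5 -> 'I_k.+1}) F (toL d))%R.
  rewrite /SqMon.
  pose h := fun (d : {ffun 'I_5 -> 'I_k.+1}) => [ffun j => d ((p^-1)%g j)].
  have hinj : injective h.
    move=> d1 d2 eq; apply/ffunP => a; have := congr1 (fun d : {ffun 'I_5 -> 'I_k.+1} => d (p a)) eq.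
    by rewrite /h !ffunE permK.
  rewrite (reindex_inj hinj) big_mkcond /=; apply: eq_bigr => d _.
  have Hsum : (\sum_(j<5) (h d j : nat))%N = sumn (toL d).
    rewrite sumn_mkseq (reindex_inj (@perm_inj _ p)) /=.
    by apply: eq_bigr => a _; rewrite /h ffunE permK inord_val.
  rewrite /F -Hsum; case: eqP => // _.
  congr (_ *: _)%R.
    rewrite -natr_prod; congr (_%:R)%R; rewrite /prodC prod_mkseq (reindex_inj (@perm_inj _ p)) /=.
    by apply: eq_big => // a _; rewrite /h ffunE permK mnmE permK nth_toL.
  by apply: congr1; apply/mnmP => j; rewrite !mnmE /h ffunE nth_toL.
rewrite (sum_ffun_dlist F Hu Hs Hc) /interp /sqL big_map big_filter [RHS]big_mkcond.
apply: eq_bigr => l _; rewrite /F; case: eqP => _ //=.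
rewrite F2scale; case: (odd _) => //.
by apply: congr1; apply/mnmP => j; rewrite !mnmE nth_mkseq.
Qed.


Definition omegaL (e : seq nat) (i : nat) : nat :=
  sumn (mkseq (fun a => alpha i.-1 (nth 0 e a)) 5).
Definition degL (e : seq nat) : nat := sumn (mkseq (nth 0 e) 5).

Lemma omega_mon5 p e i : omega (mon5 p (nth 0 e)) i = omegaL e i.
Proof.
rewrite /omega /omegaL sumn_mkseq (reindex_inj (@perm_inj _ p)) /=.
by apply: eq_bigr => a _; rewrite mnmE permK.
Qed.

Lemma mdeg_mon5 p e : mdeg (mon5 p (nth 0 e)) = degL e.
Proof.
rewrite mdegE /degL sumn_mkseq (reindex_inj (@perm_inj _ p)) /=.
by apply: eq_bigr => a _; rewrite mnmE permK.
Qed.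

Lemma nth_mon5 p E (j : 'I_5) : nth 0 (val (mon5 p E)) j = E ((p^-1)%g j).
Proof. by rewrite -mnm_nth mnmE. Qed.

Definition lexltb (f g : nat -> nat) (s n : nat) : bool :=
  has (fun i => all (fun l => f l == g l) (iota s (i - s)) && (f i < g i)) (iota s n).

Lemma lexltbP f g s n : lexltb f g s n -> lexlt s f g.
Proof.
case/hasP => i; rewrite mem_iota => /andP [hs _] /andP [/allP ha hlt].
exists i; split => //; split => // l /andP [h1 h2]; apply/eqP/ha.
by rewrite mem_iota h1 subnKC.
Qed.

Lemma lexlt_ext s f f' g g' : f =1 f' -> g =1 g' -> lexlt s f' g' -> lexlt s f g.
Proof.
move=> hf hg [i [h1 [h2 h3]]]; exists i; split => //; split; last by rewrite hf hg.
by move=> l hl; rewrite hf hg h2.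
Qed.

Lemma mono_lt_om p lv lu : lexltb (omegaL lv) (omegaL lu) 1 8 ->
  mono_lt (mon5 p (nth 0 lv)) (mon5 p (nth 0 lu)).
Proof.
move=> h; left; apply: (lexlt_ext (f' := omegaL lv) (g' := omegaL lu)).
- by move=> i; rewrite omega_mon5.
- by move=> i; rewrite omega_mon5.
exact: lexltbP h.
Qed.

Lemma omegaL_zero e s i : all (fun x => x < 2 ^ s) e -> s < i -> omegaL e i = 0.
Proof.
move=> ha hi; rewrite /omegaL sumn_mkseq big1 // => a _.
have hx : nth 0 e a < 2 ^ s.
  case: (ltnP a (size e)) => h; first by apply: (allP ha); rewrite mem_nth.
  by rewrite nth_default // expn_gt0.
rewrite /alpha divn_small //; apply: (leq_trans hx); rewrite leq_exp2l //.
by case: i hi.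
Qed.

Lemma omegaL_eq lv lu s : all (fun x => x < 2 ^ s) lv -> all (fun x => x < 2 ^ s) lu ->
  all (fun i => omegaL lv i == omegaL lu i) (iota 1 s) ->
  forall i, 1 <= i -> omegaL lv i = omegaL lu i.
Proof.
move=> hv hu ha i hi; case: (leqP i s) => his.
  by apply/eqP/(allP ha); rewrite mem_iota hi /= add1n ltnS.
by rewrite (omegaL_zero hv his) (omegaL_zero hu his).
Qed.

Lemma mono_lt_sig (p : 'S_5) lv lu (a : 'I_5) s :
  all (fun x => x < 2 ^ s) lv -> all (fun x => x < 2 ^ s) lu ->
  all (fun i => omegaL lv i == omegaL lu i) (iota 1 s) ->
  nth 0 lv a < nth 0 lu a ->
  (forall b : 'I_5, nth 0 lv b != nth 0 lu b -> p a <= p b) ->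
  mono_lt (mon5 p (nth 0 lv)) (mon5 p (nth 0 lu)).
Proof.
move=> hv hu ha hlt hb; right; split.
  by move=> i hi; rewrite !omega_mon5; apply: (omegaL_eq hv hu ha).
exists (p a : nat); split => //; split.
  move=> l /andP [_ hl].
  have hl5 : l < 5 by apply: ltn_trans hl (ltn_ord _).
  have -> : l = (Ordinal hl5 : nat) by [].
  rewrite !nth_mon5; apply/eqP; apply: contraLR hl => /hb.
  by rewrite permKV -leqNgt.
by rewrite !nth_mon5 permK.
Qed.

Lemma smax_mon5 p e s : 1 <= s -> 0 < omegaL e s -> all (fun x => x < 2 ^ s) e ->
  s < (degL e).+2 -> smax (mon5 p (nth 0 e)) = s.
Proof.
move=> h1 hpos ha hdeg; rewrite /smax mdeg_mon5; apply/eqP; rewrite eqn_leq; apply/andP; split.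
  apply/bigmax_leqP_seq => i _; rewrite omega_mon5 => hi.
  rewrite leqNgt; apply/negP => /(omegaL_zero ha) h0.
  by rewrite h0 in hi.
apply: (@leq_bigmax_seq _ _ _ (fun i => i) s); first by rewrite mem_index_iota h1.
by rewrite /= omega_mon5.
Qed.


Lemma dl1u : uniq (dlist 1 5). Proof. by vm_compute. Qed.
Lemma dl1s : all (shaped 1) (dlist 1 5). Proof. by vm_compute. Qed.
Lemma dl1c : size (dlist 1 5) = (2 ^ 5)%N. Proof. by vm_compute. Qed.
Lemma dl2u : uniq (dlist 2 5). Proof. by vm_compute. Qed.
Lemma dl2s : all (shaped 2) (dlist 2 5). Proof. by vm_compute. Qed.
Lemma dl2c : size (dlist 2 5) = (3 ^ 5)%N. Proof. by vm_compute. Qed.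

Lemma Sq1_mon5 p e : Sq 1 'X_[mon5 p (nth 0%N e)] = interp p (sqL 1 e).
Proof. by rewrite SqX SqMon_mon5 // ?dl1u ?dl1s ?dl1c. Qed.
Lemma Sq2_mon5 p e : Sq 2 'X_[mon5 p (nth 0%N e)] = interp p (sqL 2 e).
Proof. by rewrite SqX SqMon_mon5 // ?dl2u ?dl2s ?dl2c. Qed.

Lemma interp_cons p l L :
  interp p (l :: L) = ('X_[mon5 p (nth 0%N l)] + \sum_(v <- [seq mon5 p (nth 0%N x) | x <- L]) 'X_[v])%R.
Proof. by rewrite /interp big_cons big_map. Qed.

Lemma ordE (n : nat) (hb : (n < 5)%N) : Ordinal hb = inord n.
Proof. by apply: ord_inj; rewrite inordK. Qed.

Lemma ord0E : (ord0 : 'I_5) = inord 0.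
Proof. by apply: ord_inj; rewrite inordK. Qed.

Definition eu1 := [:: 2; 1; 3; 3; 3]%N.
Definition VL1 := [:: [:: 1; 2; 3; 3; 3]; [:: 1; 1; 4; 3; 3]; [:: 1; 1; 3; 4; 3]; [:: 1; 1; 3; 3; 4]]%N.
Definition eu2 := [:: 3; 4; 3; 7; 7]%N.
Definition VLo := [:: [:: 2; 3; 3; 8; 8]; [:: 2; 3; 4; 7; 8]; [:: 2; 3; 4; 8; 7]; [:: 2; 4; 3; 7; 8];
  [:: 2; 4; 3; 8; 7]; [:: 2; 4; 4; 7; 7]; [:: 2; 3; 3; 7; 9]; [:: 2; 3; 3; 9; 7];
  [:: 3; 3; 3; 7; 8]; [:: 3; 3; 3; 8; 7]]%N.
Definition VL2 := VLo ++ [:: [:: 2; 3; 5; 7; 7]; [:: 2; 5; 3; 7; 7]; [:: 3; 3; 4; 7; 7]]%N.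

Lemma part1 (p : 'S_5) : (p ord0 < p (inord 1))%N ->
  strictly_inadmissible (mon5 p (nth 0%N eu1)).
Proof.
rewrite ord0E => hp; exists [seq mon5 p (nth 0%N x) | x <- VL1]; split.
  move=> v /mapP [l hl ->]; rewrite !mdeg_mon5; split.
    by move: hl; rewrite !inE => /or4P [] /eqP ->; vm_compute.
  move: hl; rewrite !inE => /or4P [] /eqP ->; try by apply: mono_lt_om; vm_compute.
  apply: (@mono_lt_sig p _ _ (inord 0) 2); try by rewrite ?inordK //; vm_compute.
  case => [[|[|[|[|[|?]]]]] hb] //=; rewrite /eu1 //= => _; rewrite ordE; lia.
have -> : smax (mon5 p (nth 0%N eu1)) = 2 by apply: smax_mon5; vm_compute.
rewrite -interp_cons -(@interp_perm p (xnorm (sqL 1 [:: 1; 1; 3; 3; 3]%N))); last by vm_compute.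
rewrite interp_xnorm -Sq1_mon5.
by apply: (hitAw (w := [:: 1%N])).
Qed.

Lemma part2 (p : 'S_5) : (p ord0 < p (inord 1) < p (inord 2))%N ->
  strictly_inadmissible (mon5 p (nth 0%N eu2)).
Proof.
rewrite ord0E => /andP [hp1 hp2]; exists [seq mon5 p (nth 0%N x) | x <- VL2]; split.
  move=> v /mapP [l hl ->]; rewrite !mdeg_mon5; split.
    have hd : all (fun l => degL l == degL eu2) VL2 by vm_compute.
    by apply/eqP; apply: (allP hd).
  move: hl; rewrite mem_cat => /orP [hl|].
    have ho : all (fun l => lexltb (omegaL l) (omegaL eu2) 1 8) VLo by vm_compute.
    by apply: mono_lt_om; apply: (allP ho).
  rewrite !inE => /or3P [] /eqP ->.
  - apply: (@mono_lt_sig p _ _ (inord 0) 3); try by rewrite ?inordK //; vm_compute.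
    case => [[|[|[|[|[|?]]]]] hb] //=; rewrite /eu2 //= => _; rewrite ordE; lia.
  - apply: (@mono_lt_sig p _ _ (inord 0) 3); try by rewrite ?inordK //; vm_compute.
    case => [[|[|[|[|[|?]]]]] hb] //=; rewrite /eu2 //= => _; rewrite ordE; lia.
  - apply: (@mono_lt_sig p _ _ (inord 1) 3); try by rewrite ?inordK //; vm_compute.
    case => [[|[|[|[|[|?]]]]] hb] //=; rewrite /eu2 //= => _; rewrite ordE; lia.
have -> : smax (mon5 p (nth 0%N eu2)) = 3 by apply: smax_mon5; vm_compute.
rewrite -interp_cons -(@interp_perm p (xnorm (sqL 2 [:: 2; 3; 3; 7; 7]%N ++ sqL 1 [:: 3; 3; 3; 7; 7]%N)));
  last by vm_compute.
rewrite interp_xnorm interp_cat -Sq1_mon5 -Sq2_mon5.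
by apply: hitAD; [apply: (hitAw (w := [:: 2%N])) | apply: (hitAw (w := [:: 1%N]))].
Qed.

Theorem lemma3p7 :
  forall p : 'S_5,
    ((p ord0 < p (inord 1))%N ->
       strictly_inadmissible
         (mon5 p (fun a => nth 0%N [:: 2; 1; 3; 3; 3]%N a))) /\
    ((p ord0 < p (inord 1) < p (inord 2))%N ->
       strictly_inadmissible
         (mon5 p (fun a => nth 0%N [:: 3; 4; 3; 7; 7]%N a))).
Proof. by move=> p; split; [exact: part1 | exact: part2]. Qed.
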